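(* Let $\mathfrak h\in\mathrm{Mult}_\rho$, let $\Delta$ be a segment admissible to $\mathfrak h$, and let $\Delta'$ be a segment linked to $\Delta$ with $\Delta'>\Delta$. The following are equivalent: (1) $(\Delta,\Delta',\mathfrak h)$ satisfies the non-overlapping property; (2) $\eta_{\Delta'}(\mathfrak h)=\eta_{\Delta'}(\mathfrak r(\Delta,\mathfrak h))$; (3) $(\Delta,\Delta',\mathfrak h)$ satisfies the intermediate segment property.
   Context: Segments: for integers $a\le b$, $[a,b]_\rho$ (think of the integer interval $\{a,\dots,b\}$), with $a(\Delta)=a$, $b(\Delta)=b$, and inclusion of segments as intervals. Two segments are linked if their union is a segment (an interval) and neither contains the other; for linked $\Delta,\Delta'$ write $\Delta<\Delta'$ (or $\Delta'>\Delta$) if $b(\Delta)<b(\Delta')$. A multisegment is a finite multiset of nonempty segments; $\mathrm{Mult}_\rho$ is the set of multisegments; $+$, $-$ are multiset sum and difference (adding an empty segment does nothing); $\mathfrak h[c]$ is the submultisegment of segments of $\mathfrak h$ starting at $c$. Write $[x,y]_\rho\prec^L[x',y']_\rho$ if $x<x'$, or $x=x'$ and $y<y'$. A segment $\Delta=[a,b]_\rho$ is admissible to $\mathfrak h$ if $\mathfrak h$ contains a segment $[a,c]_\rho$ with $c\ge b$. Removal process: for $\Delta=[a,b]_\rho$ admissible to $\mathfrak h$, let $\Delta_1=[a_1,b_1]_\rho$ be a shortest segment of $\mathfrak h$ with $a_1=a$ and $b_1\ge b$; recursively, let $\Delta_i=[a_i,b_i]_\rho$ be the $\prec^L$-minimal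 segment of $\mathfrak h$ with $a_{i-1}<a_i$ and $b\le b_i<b_{i-1}$, stopping when none exists; $\Delta_1,\dots,\Delta_r$ is the removal sequence for $(\Delta,\mathfrak h)$. Put $\Delta_i^{tr}=[a_{i+1},b_i]_\rho$ for $i<r$ and $\Delta_r^{tr}=[b+1,b_r]_\rho$ (possibly empty), and $\mathfrak r(\Delta,\mathfrak h)=\mathfrak h-\sum_i\Delta_i+\sum_i\Delta_i^{tr}$. For a segment $\Delta=[a,b]_\rho$, $\varepsilon_\Delta(\mathfrak h)=|\{\widetilde\Delta\in\mathfrak h[a]:\Delta\subset\widetilde\Delta\}|$ (with multiplicity), and $\eta_\Delta(\mathfrak h)=(\varepsilon_{[a,b]_\rho}(\mathfrak h),\varepsilon_{[a+1,b]_\rho}(\mathfrak h),\dots,\varepsilon_{[b,b]_\rho}(\mathfrak h))$. Non-overlapping property: the triple $(\Delta,\Delta',\mathfrak h)$ satisfies it if, for the shortest segment $\overline\Delta$ in the removal sequence for $(\Delta,\mathfrak h)$ that contains the point $a(\Delta')-1$, one has $\Delta'\not\subset\overline\Delta$. Intermediate segment property: the triple $(\Delta,\Delta',\mathfrak h)$ satisfies it if there is $\widetilde\Delta\in\mathfrak h$ with $a(\Delta)\le a(\widetilde\Delta)<a(\Delta')$ and $b(\Delta)\le b(\widetilde\Delta)<b(\Delta')$. *)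

(* Defs.v *)
(* Segments [a,b]_rho are encoded by pairs of integers (a,b);
   multisegments by finite sequences of segments (multisets up to order). *)
From mathcomp Require Import all_boot all_order all_algebra.
Set Implicit Arguments. Unset Strict Implicit. Unset Printing Implicit Defensive.
Import Order.TTheory GRing.Theory Num.Theory.
Local Open Scope ring_scope.

Definition seg := (int * int)%type.
Definition sa (s : seg) : int := s.1.
Definition sb (s : seg) : int := s.2.

Definition seg_ne (s : seg) : bool := sa s <= sb s.
Definition is_mult (h : seq seg) : bool := all seg_ne h.

Definition subseg (x y : seg) : bool := (sa y <= sa x) && (sb x <= sb y).

Definition linked (x y : seg) : bool :=
  [&& sa y <= sb x + 1, sa x <= sb y + 1, ~~ subseg x y & ~~ subseg y x].

Definition precL (s t : seg) : bool := (sa s < sa t) || ((sa s == sa t) && (sb s < sb t)).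

Definition admissible (D : seg) (h : seq seg) : bool :=
  has (fun s => (sa s == sa D) && (sb D <= sb s)) h.

Fixpoint argmin_by (lt : rel seg) (l : seq seg) : option seg :=
  match l with
  | [::] => None
  | x :: l' => match argmin_by lt l' with
               | None => Some x
               | Some y => if lt y x then Some y else Some x
               end
  end.

Definition seg_len (s : seg) : int := sb s - sa s.
Definition shorter (s t : seg) : bool := seg_len s < seg_len t.

Fixpoint rem_chain (n : nat) (D : seg) (h : seq seg) (p : seg) : seq seg :=
  match n with
  | 0 => [::]
  | n'.+1 =>
    match argmin_by precL
            [seq s <- h | [&& sa p < sa s, sb D <= sb s & sb s < sb p]] with
    | None => [::]
    | Some s => s :: rem_chain n' D h s
    end
  end.

(* removal sequence Delta_1, ..., Delta_r for (D, h); the fuel size h is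
   sufficient since the b_i strictly decrease and all Delta_i lie in h *)
Definition removal_seq (D : seg) (h : seq seg) : seq seg :=
  match argmin_by shorter [seq s <- h | (sa s == sa D) && (sb D <= sb s)] with
  | None => [::]
  | Some d1 => d1 :: rem_chain (size h) D h d1
  end.

Fixpoint truncs (D : seg) (l : seq seg) : seq seg :=
  match l with
  | [::] => [::]
  | [:: d] => [:: (sb D + 1, sb d)]
  | d :: ((d' :: _) as l') => (sa d', sb d) :: truncs D l'
  end.

Definition removal (D : seg) (h : seq seg) : seq seg :=
  let l := removal_seq D h in
  foldl (fun acc d => rem d acc) h l ++ filter seg_ne (truncs D l).

Definition eps (D : seg) (h : seq seg) : nat :=
  count (fun s => (sa s == sa D) && subseg D s) h.

Definition eta (D : seg) (h : seq seg) : seq nat :=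
  [seq eps (sa D + (i%:Z), sb D) h | i <- iota 0 (`|sb D - sa D|%N.+1)].

Definition non_overlapping (D D' : seg) (h : seq seg) : bool :=
  match argmin_by shorter
          [seq s <- removal_seq D h | (sa s <= sa D' - 1) && (sa D' - 1 <= sb s)] with
  | Some Dbar => ~~ subseg D' Dbar
  | None => false
  end.

Definition intermediate_seg (D D' : seg) (h : seq seg) : bool :=
  has (fun s => [&& sa D <= sa s, sa s < sa D', sb D <= sb s & sb s < sb D']) h.

(* Main.v *)
Require Import Defs.
From mathcomp Require Import all_boot all_order all_algebra zify.
Import Order.TTheory GRing.Theory Num.Theory.
Local Open Scope ring_scope.
Set Implicit Arguments. Unset Strict Implicit. Unset Printing Implicit Defensive.

Lemma argmin_none (lt : rel seg) (l : seq seg) : argmin_by lt l = None -> l = [::].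
Proof. by case: l => //= x l; case: argmin_by => // y; case: ifP. Qed.

Lemma argmin_some (lt : rel seg) l m :
  (forall x y z, lt z x -> ~~ lt y x -> lt z y) ->
  (forall x y, lt x y -> ~~ lt y x) ->
  argmin_by lt l = Some m -> m \in l /\ (forall y, y \in l -> ~~ lt y m).
Proof.
move=> ntr asy; have irr : forall x, ~~ lt x x.
  by move=> x; apply/negP => H; move: (asy _ _ H); rewrite H.
elim: l m => [|x l IH] m //=.
case E: (argmin_by lt l) => [y|].
  have [yl Hy] := IH _ E.
  case: ifP => Hyx [<-].
    split; first by rewrite inE yl orbT.
    move=> z; rewrite inE => /orP[/eqP->|zl]; [exact: asy | exact: Hy].
  split; first by rewrite mem_head.
  move=> z; rewrite inE => /orP[/eqP->|zl]; first exact: irr.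
  apply/negP => Hzx; have := ntr _ _ _ Hzx (negbT Hyx); apply/negP; exact: Hy.
move=> [<-]; rewrite (argmin_none E); split; first by rewrite mem_head.
by move=> z; rewrite inE => /eqP->; exact: irr.
Qed.

Lemma precL_ntr x y z : precL z x -> ~~ precL y x -> precL z y.
Proof. rewrite /precL /sa /sb. lia. Qed.
Lemma precL_asy x y : precL x y -> ~~ precL y x.
Proof. rewrite /precL /sa /sb. lia. Qed.
Lemma shorter_ntr x y z : shorter z x -> ~~ shorter y x -> shorter z y.
Proof. rewrite /shorter /seg_len /sa /sb. lia. Qed.
Lemma shorter_asy x y : shorter x y -> ~~ shorter y x.
Proof. rewrite /shorter /seg_len /sa /sb. lia. Qed.

Definition cand (b : int) (u y : seg) : bool := [&& sa u < sa y, b <= sb y & sb y < sb u].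
Definition step (b : int) (h : seq seg) (u v : seg) : bool :=
  [&& v \in h, cand b u v & all (fun y => cand b u y ==> ~~ precL y v) h].

Lemma chain_path n D h p : path (step (sb D) h) p (rem_chain n D h p).
Proof.
elim: n p => [|n IH] p //=.
case E: argmin_by => [s|] //=.
have [sF Hm] := argmin_some precL_ntr precL_asy E.
rewrite IH andbT; move: sF; rewrite mem_filter => /andP[cs sh].
rewrite /step sh /cand cs /=; apply/allP => y yh; apply/implyP => cy.
by apply: Hm; rewrite mem_filter yh andbT.
Qed.

Lemma count_lt (T : eqType) (P Q : pred T) s x :
  subpred P Q -> x \in s -> Q x -> ~~ P x -> (count P s < count Q s)%N.
Proof.
move=> sPQ; elim: s => //= y s IH; rewrite inE => /orP[/eqP<-|xs] Qx Px.
  rewrite Qx (negbTE Px) /= add0n add1n ltnS; exact: sub_count.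
have := IH xs Qx Px; case Py: (P y); first by rewrite (sPQ _ Py) /= ltn_add2l.
by move=> H; rewrite add0n; apply: (leq_trans H); apply: leq_addl.
Qed.

Lemma chain_term n D h p :
  leq (count (fun y => (sb D <= sb y) && (sb y < sb p)) h) n ->
  ~~ has (cand (sb D) (last p (rem_chain n D h p))) h.
Proof.
elim: n p => [|n IH] p /= Hc.
  rewrite has_count -leqNgt; apply: leq_trans Hc; apply: sub_count.
  by move=> y; rewrite /cand => /and3P[_ -> ->].
case E: argmin_by => [s|] /=.
  have [sF _] := argmin_some precL_ntr precL_asy E.
  move: sF; rewrite mem_filter => /andP[cs sh].
  apply: IH; rewrite -ltnS; apply: leq_trans Hc; apply: (count_lt _ sh).
  - move=> y /andP[-> H] /=; move: cs; rewrite /cand; lia.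
  - by move: cs; rewrite /cand => /and3P[_ -> ->].
  - by rewrite ltxx andbF.
by rewrite has_filter (argmin_none E) eqxx.
Qed.

Definition lt2 (u v : seg) : bool := (sa u < sa v) && (sb v < sb u).
Lemma lt2_trans : transitive lt2.
Proof. move=> y x z; rewrite /lt2; lia. Qed.

Lemma cmp p t : path lt2 p t ->
  forall u v, u \in p :: t -> v \in p :: t -> [|| u == v, lt2 u v | lt2 v u].
Proof.
elim: t p => [|q t IH] p.
  by move=> _ u v; rewrite !inE => /eqP-> /eqP->; rewrite eqxx.
move=> Hp; have Hall := order_path_min lt2_trans Hp.
move: Hp => /andP[_ Hq] u v; rewrite in_cons => /orP[/eqP->|uin];
  rewrite in_cons => /orP[/eqP->|vin].
- by rewrite eqxx.
- by rewrite (allP Hall v vin) orbT.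
- by rewrite (allP Hall u uin) !orbT.
- exact: IH Hq u v uin vin.
Qed.

Lemma path_all (e : rel seg) (Q : pred seg) p t :
  (forall u v, e u v -> Q v) -> path e p t -> all Q t.
Proof.
move=> H; elim: t p => //= q t IH p /andP[epq Hq].
by rewrite (H _ _ epq) (IH q Hq).
Qed.

Lemma W b h p t s : path (step b h) p t -> ~~ has (cand b (last p t)) h ->
  s \in h -> cand b p s -> exists2 u, u \in t & (sa u <= sa s) && (sb u <= sb s).
Proof.
elim: t p => [|q t IH] p /=.
  by move=> _ Hn sh cs; move/hasPn: Hn => /(_ s sh); rewrite cs.
move=> /andP[Hst Hp] Hn sh cs; move: Hst => /and3P[qh cq Hall].
have := allP Hall s sh; rewrite cs /= => Hnp.
case: (leP (sb q) (sb s)) => Hle.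
  exists q; first by rewrite mem_head.
  by move: Hnp; rewrite /precL Hle andbT; lia.
have cqs : cand b q s by move: Hnp cs cq Hle; rewrite /cand /precL; lia.
have [u ut Hu] := IH q Hp Hn sh cqs.
by exists u; first by rewrite inE ut orbT.
Qed.

Lemma countC (P : pred seg) x s : count P (x :: s) = (P x + count P s)%N.
Proof. by []. Qed.

Definition Rx (x e : int) (s : seg) : bool := (sa s == x) && subseg (x, e) s.

Lemma truncs_cons2 D p q t : truncs D [:: p, q & t] = (sa q, sb p) :: truncs D (q :: t).
Proof. by []. Qed.

Lemma Rx_mono x e s m : sb s <= m -> Rx x e s -> Rx x e (sa s, m).
Proof. rewrite /Rx /subseg /sa /sb /=. lia. Qed.

Lemma Mlem D x e p t : path lt2 p t ->
  leq (count (Rx x e) t) (count (Rx x e) (truncs D (p :: t))).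
Proof.
elim: t p => [|q t IH] p // /andP[Hpq Hp].
rewrite truncs_cons2 !countC.
have Hm : Rx x e q -> Rx x e (sa q, sb p).
  by apply: Rx_mono; move: Hpq; rewrite /lt2; lia.
have H := IH q Hp; case Rq: (Rx x e q).
  by rewrite (Hm Rq) leq_add2l.
lia.
Qed.

Lemma Z1 D x e p t : path lt2 p t -> sb p < e ->
  count (Rx x e) t = 0%N /\ count (Rx x e) (truncs D (p :: t)) = 0%N.
Proof.
elim: t p => [|q t IH] p.
  move=> _ He /=; rewrite /Rx /subseg /=; split => //.
  have -> : (e <= sb p) = false by lia.
  by rewrite !andbF.
move=> /andP[Hpq Hp] He; rewrite truncs_cons2 /=.
have Hq : sb q < e by move: Hpq; rewrite /lt2; lia.
have [-> ->] := IH q Hp Hq.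
rewrite /Rx /subseg /=.
have -> : (e <= sb p) = false by lia.
have -> : (e <= sb q) = false by lia.
by rewrite !andbF.
Qed.

Lemma Z2 D x e c p t : path lt2 p t -> c < x ->
  (exists2 u, u \in p :: t & (sa u <= c) && (sb u < e)) ->
  count (Rx x e) t = 0%N /\ count (Rx x e) (truncs D (p :: t)) = 0%N.
Proof.
elim: t p => [|q t IH] p Hp Hc [u uin Hu].
  by apply: Z1 => //; move: uin Hu; rewrite inE => /eqP-> /andP[].
move: uin; rewrite inE => /orP[/eqP Eu|uin].
  by apply: Z1 => //; move: Hu; rewrite Eu => /andP[].
have Hall := order_path_min lt2_trans Hp.
move: Hp => /andP[Hpq Hq].
have Hsaq : sa q <= c.
  move: uin; rewrite inE => /orP[/eqP Eu|uin']; first by move: Hu; rewrite Eu; lia.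
  have := order_path_min lt2_trans Hq => /allP /(_ u uin').
  by move: Hu; rewrite /lt2; lia.
have [Ht Htr] := IH q Hq Hc (ex_intro2 _ _ u uin Hu).
rewrite truncs_cons2 /= Ht Htr.
rewrite /Rx /=.
have -> : (sa q == x) = false by lia.
by [].
Qed.

Lemma Nlem D x0 e p t : path lt2 p t -> all seg_ne t -> e <= sb p ->
  (forall q, q \in t -> sa q < x0 -> e <= sb q) ->
  x0 <= sb D + 1 -> sb D + 1 <= e ->
  exists x, [/\ x0 <= x, x <= e &
    (count (Rx x e) t < count (Rx x e) (truncs D (p :: t)))%N].
Proof.
elim: t p => [|q t IH] p.
  move=> _ _ He _ H1 H2; exists (sb D + 1); split => //=.
  by rewrite /Rx /subseg /= eqxx lexx He.
move=> /andP[Hpq Hp] /andP[neq net] He Hq H1 H2.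
case: (leP e (sb q)) => Heq.
  have Hq' : forall r, r \in t -> sa r < x0 -> e <= sb r.
    by move=> r rin; apply: Hq; rewrite inE rin orbT.
  have [x [Hx1 Hx2 Hx]] := IH q Hp net Heq Hq' H1 H2.
  exists x; split => //; rewrite truncs_cons2 !countC.
  have Hm : Rx x e q -> Rx x e (sa q, sb p).
    by apply: Rx_mono; move: Hpq; rewrite /lt2; lia.
  case Rq: (Rx x e q).
    by rewrite (Hm Rq) ltn_add2l.
  lia.
have Hsa : x0 <= sa q.
  case: (ltP (sa q) x0) => // Hlt.
  by have := Hq q (mem_head _ _) Hlt; lia.
exists (sa q); split => //.
  by move: neq; rewrite /seg_ne; lia.
rewrite truncs_cons2 !countC.
have -> : Rx (sa q) e q = false by rewrite /Rx /subseg /=; lia.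
have -> : Rx (sa q) e (sa q, sb p) = true by rewrite /Rx /subseg /=; lia.
have := Mlem D (sa q) e Hp; lia.
Qed.

Lemma count_foldl_rem (P : pred seg) (l h : seq seg) : uniq l -> {subset l <= h} ->
  (count P (foldl (fun acc d => rem d acc) h l) + count P l = count P h)%N.
Proof.
elim: l h => [|x l IH] h /=; first by rewrite addn0.
move=> /andP[xl ul] sub.
have xh : x \in h by apply: sub; rewrite mem_head.
have Hp := perm_to_rem xh.
have sub' : {subset l <= rem x h}.
  move=> y yl; have : y \in x :: l by rewrite inE yl orbT.
  move/sub.
  rewrite (perm_mem Hp) inE => /orP[/eqP Ey|//].
  by move: xl; rewrite -Ey yl.
have := IH (rem x h) ul sub'.
have := (permP Hp) P; rewrite /= => ->.
by move=> <-; rewrite addnCA.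
Qed.

Ltac slia := repeat match goal with
 | H : is_true (path _ _ _) |- _ => clear H
 | H : is_true (all _ _) |- _ => clear H
 | H : is_true (has _ _) |- _ => clear H
 | H : is_true (~~ has _ _) |- _ => clear H
 | H : is_true (~~ ?b) |- _ => match b with context [has] => clear H end
 | H : is_true (uniq _) |- _ => clear H
 | H : is_true (is_mult _) |- _ => clear H
 | H : is_true (admissible _ _) |- _ => clear H
 | H : is_true (linked _ _) |- _ => clear H
 | H : argmin_by _ _ = _ |- _ => clear H
 | H : removal_seq _ _ = _ |- _ => clear H
 | H : _ <-> _ |- _ => clear H
 | H : forall _, _ |- _ => clear H
 end; lia.

Theorem mainTheorem17 (h : seq seg) (D D' : seg) :
  is_mult h -> seg_ne D -> seg_ne D' ->
  admissible D h -> linked D D' -> sb D < sb D' ->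
  [<-> non_overlapping D D' h;
       eta D' h = eta D' (removal D h);
       intermediate_seg D D' h].
Proof.
move=> Hmult neD neD' Had Hlk Hbb.
have [HaD HaD'] : sa D < sa D' /\ sa D' <= sb D + 1.
  by move: Hlk neD neD' Hbb; rewrite /linked /subseg /seg_ne; slia.
clear Hlk.
case E1 : (argmin_by shorter [seq s <- h | (sa s == sa D) && (sb D <= sb s)]) => [d1|];
  last first.
  by move: Had; rewrite /admissible has_filter (argmin_none E1) eqxx.
have [d1F Hmin] := argmin_some shorter_ntr shorter_asy E1.
clear Had.
move: d1F; rewrite mem_filter => /andP[/andP[/eqP Ea1 Hb1] d1h].
set t := rem_chain (size h) D h d1.
have Erem : removal_seq D h = d1 :: t by rewrite /removal_seq E1.
have Hpath : path (step (sb D) h) d1 t := chain_path (size h) D h d1.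
have Hterm : ~~ has (cand (sb D) (last d1 t)) h.
  exact: chain_term (count_size _ h).
clearbody t.
have Hlt2 : path lt2 d1 t.
  apply: sub_path Hpath => u v /and3P[_ + _]; rewrite /cand /lt2; slia.
have Hth : all (fun u => (u \in h) && (sb D <= sb u)) t.
  apply: path_all Hpath => u v /and3P[-> + _]; rewrite /cand; slia.
have HallA := order_path_min lt2_trans Hlt2.
have HL : forall u, u \in d1 :: t -> [/\ u \in h, sb D <= sb u & sa D <= sa u].
  move=> u; rewrite inE => /orP[/eqP->|ut]; first by split => //; slia.
  have /andP[-> ->] := allP Hth u ut; split => //.
  by have := allP HallA u ut; rewrite /lt2; slia.
have Huniq : uniq (d1 :: t).
  apply: (sorted_uniq lt2_trans) => //; by move=> x; rewrite /lt2; slia.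
have Hsub : {subset d1 :: t <= h} by move=> u /HL [].
set H1 := has (fun s => (sa s <= sa D' - 1) && (sb s < sb D')) (d1 :: t).
have EN : non_overlapping D D' h <-> H1.
  rewrite /non_overlapping Erem.
  case E : argmin_by => [m|].
    have [mF Hm] := argmin_some shorter_ntr shorter_asy E.
    move: mF; rewrite mem_filter => /andP[Gm mL].
    split.
      move=> Hns; apply/hasP; exists m => //; move: Hns Gm; rewrite /subseg; slia.
    move=> /hasP[s sL Hs].
    have [_ Hbs _] := HL s sL.
    have Gs : (sa s <= sa D' - 1) && (sa D' - 1 <= sb s) by slia.
    have := Hm s; rewrite mem_filter Gs sL => /(_ isT).
    have := cmp Hlt2 mL sL; rewrite /shorter /seg_len /lt2 /subseg.
    case/or3P => [/eqP->||]; slia.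
  split => // /hasP[s sL Hs].
  have [_ Hbs _] := HL s sL.
  have : s \in [seq s <- d1 :: t | (sa s <= sa D' - 1) && (sa D' - 1 <= sb s)].
    by rewrite mem_filter sL andbT; slia.
  by rewrite (argmin_none E).
have EI : intermediate_seg D D' h <-> H1.
  rewrite /intermediate_seg; split.
    move=> /hasP[s sh Hs].
    case: (leP (sb d1) (sb s)) => Hle.
      by apply/hasP; exists d1; [rewrite mem_head | slia].
    case: (eqVneq (sa s) (sa D)) => Esa.
      have := Hmin s; rewrite mem_filter Esa eqxx sh /=.
      have -> : sb D <= sb s by slia.
      by move=> /(_ isT); rewrite /shorter /seg_len; slia.
    have cs : cand (sb D) d1 s by rewrite /cand; slia.
    have [u ut Hu] := W Hpath Hterm sh cs.
    by apply/hasP; exists u; [rewrite inE ut orbT | slia].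
  move=> /hasP[s sL Hs]; have [sh Hb Ha] := HL s sL.
  by apply/hasP; exists s => //; slia.
have Hpt : forall x, sa D' <= x <= sb D' ->
   (count (Rx x (sb D')) h = count (Rx x (sb D')) (removal D h) <->
    count (Rx x (sb D')) (d1 :: t) = count (Rx x (sb D')) (truncs D (d1 :: t))).
  move=> x Hx; rewrite /removal Erem count_cat count_filter.
  have -> : count (predI (Rx x (sb D')) seg_ne) (truncs D (d1 :: t)) =
            count (Rx x (sb D')) (truncs D (d1 :: t)).
    apply: eq_count => s /=; apply/idP/idP => [/andP[]//|Rs].
    by rewrite Rs /=; move: Rs; rewrite /Rx /subseg /seg_ne /=; slia.
  have := count_foldl_rem (Rx x (sb D')) Huniq Hsub.
  slia.
have Rd1 : forall x, sa D' <= x -> Rx x (sb D') d1 = false.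
  by move=> x Hx; rewrite /Rx; slia.
have EE : eta D' h = eta D' (removal D h) <-> H1.
  rewrite /eta; split.
    move=> Heta; apply/negPn/negP => Hn.
    have net : all seg_ne t.
      apply/allP => u ut; have uL : u \in d1 :: t by rewrite inE ut orbT.
      have [uh _ _] := HL u uL; exact: (allP Hmult).
    have He : sb D' <= sb d1.
      by move/hasPn: Hn => /(_ d1 (mem_head _ _)); slia.
    have Hq : forall q, q \in t -> sa q < sa D' -> sb D' <= sb q.
      move=> q qt Hq'; have qL : q \in d1 :: t by rewrite inE qt orbT.
      by move/hasPn: Hn => /(_ q qL); slia.
    have Hb1' : sb D + 1 <= sb D' by slia.
    have [x [Hx1 Hx2 Hx]] := Nlem Hlt2 net He Hq HaD' Hb1'.
    have Hi : (`|x - sa D'|%N \in iota 0 (`|sb D' - sa D'|%N).+1).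
      by rewrite mem_iota; slia.
    have := (iffRL (eq_in_map _ _ _) Heta) _ Hi.
    have -> : sa D' + (`|x - sa D'|%N)%:Z = x by slia.
    have Hxr : sa D' <= x <= sb D' by slia.
    move=> /(Hpt x Hxr).
    rewrite countC (Rd1 x Hx1); slia.
  move=> HH; apply/eq_in_map => i; rewrite mem_iota => Hi.
  set x := sa D' + i%:Z.
  have Hx : sa D' <= x <= sb D' by rewrite /x; slia.
  apply/(Hpt x Hx).
  have [Ht Htr] : count (Rx x (sb D')) t = 0%N /\
                 count (Rx x (sb D')) (truncs D (d1 :: t)) = 0%N.
    have Hc : sa D' - 1 < x by slia.
    apply: (@Z2 D x (sb D') (sa D' - 1) d1 t Hlt2 Hc).
    by move/hasP: HH => [s sL Hs]; exists s.
  have Hx1 : sa D' <= x by slia.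
  by rewrite countC Ht Htr (Rd1 x Hx1).
split; first by move=> /EN /EE.
split; first by move=> /EE /EI.
by move=> /EI /EN.
Qed.
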